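(* Let $X$ be a Banach lattice and $F_1,F_2\colon X^*\to\mathbb R\cup\{+\infty\}$ two proper functions such that $F_2\ll_{\mathrm Q}F_1$. Then $F_1^*\ll_{\mathrm P}F_2^*$. In particular, if $F\colon X^*\to\mathbb R\cup\{+\infty\}$ is a proper substitutable function, then $F^*\colon X\to\mathbb R\cup\{+\infty\}$ is submodular.
   Context: A Banach lattice is a Banach space with a lattice partial order (inf/sup $\wedge,\vee$) compatible with addition and nonnegative scaling and with $|\phi_1|\leq|\phi_2|\Rightarrow\|\phi_1\|\leq\|\phi_2\|$ ($\phi^+=\phi\vee0$, $\phi^-=-(\phi\wedge0)$, $|\phi|=\phi^++\phi^-$). $X^*$ carries the dual order ($\mu\leq\nu$ iff $\langle\mu,\phi\rangle\leq\langle\nu,\phi\rangle$ for all $\phi\geq0$); $[a,b]=\{m:a\leq m\leq b\}$. For $F\colon X^*\to\mathbb R\cup\{+\infty\}$, $F^*(\phi)=\sup_{\mu\in X^*}\langle\mu,\phi\rangle-F(\mu)$, $\phi\in X$. $F_2\ll_{\mathrm Q}F_1$ means: for all $\mu_1,\mu_2\in X^*$ and every $t_{21}\in[0,(\mu_2-\mu_1)^+]$ there exists $t_{12}\in[0,(\mu_1-\mu_2)^+]$ with $F_1(\mu_1+t_{21}-t_{12})+F_2(\mu_2-t_{21}+t_{12})\leq F_1(\mu_1)+F_2(\mu_2)$; substitutable means $F\ll_{\mathrm Q}F$. For $E_1,E_2$ on $X$, $E_1\ll_{\mathrm P}E_2$ means $E_1(\phi_1\wedge\phi_2)+E_2(\phi_1\vee\phi_2)\leq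 E_1(\phi_1)+E_2(\phi_2)$ for all $\phi_1,\phi_2$; submodular means $E\ll_{\mathrm P}E$. *)

(* Defs.v *)
From HB Require Import structures.
From mathcomp Require Import all_boot all_order all_algebra.
From mathcomp Require Import all_classical all_reals all_analysis.
Set Implicit Arguments. Unset Strict Implicit. Unset Printing Implicit Defensive.
Import Order.TTheory GRing.Theory Num.Theory.
Import numFieldNormedType.Exports.
Local Open Scope ring_scope.
Local Open Scope classical_set_scope.

Section BanachLattice.
Variables (R : realType) (X : completeNormedModType R).
Variables (meet join : X -> X -> X).

Definition bl_le (x y : X) : Prop := meet x y = x.
Definition bl_pos (x : X) : X := join x 0.
Definition bl_neg (x : X) : X := - meet x 0.
Definition bl_abs (x : X) : X := bl_pos x + bl_neg x.

Record is_banach_lattice : Prop := {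
  bl_meetC : forall x y, meet x y = meet y x;
  bl_joinC : forall x y, join x y = join y x;
  bl_meetA : forall x y z, meet x (meet y z) = meet (meet x y) z;
  bl_joinA : forall x y z, join x (join y z) = join (join x y) z;
  bl_meetKU : forall x y, meet x (join x y) = x;
  bl_joinKI : forall x y, join x (meet x y) = x;
  bl_le_add : forall x y z, bl_le x y -> bl_le (x + z) (y + z);
  bl_le_scale : forall (a : R) x y, 0 <= a -> bl_le x y -> bl_le (a *: x) (a *: y);
  bl_norm_mono : forall x y, bl_le (bl_abs x) (bl_abs y) -> `|x| <= `|y|
}.

(* elements of the topological dual X^*, represented as functions X -> R *)
Definition dual (mu : X -> R) : Prop :=
  (forall (a : R) (x y : X), mu (a *: x + y) = a * mu x + mu y) /\ continuous mu.

Definition dle (mu nu : X -> R) : Prop :=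
  forall phi, bl_le 0 phi -> mu phi <= nu phi.

Definition is_dual_sup (p a b : X -> R) : Prop :=
  [/\ dual p, dle a p, dle b p &
      forall q, dual q -> dle a q -> dle b q -> dle p q].

Definition dadd (mu nu : X -> R) : X -> R := fun x => mu x + nu x.
Definition dsub (mu nu : X -> R) : X -> R := fun x => mu x - nu x.
Definition dzero : X -> R := fun _ => 0.

Definition proper_dual (F : (X -> R) -> \bar R) : Prop :=
  (forall mu, dual mu -> F mu <> -oo%E) /\
  (exists mu, dual mu /\ (F mu < +oo)%E).

Definition conj (F : (X -> R) -> \bar R) (phi : X) : \bar R :=
  ereal_sup [set ((mu phi)%:E - F mu)%E | mu in [set mu | dual mu]].

Definition Qrel (F2 F1 : (X -> R) -> \bar R) : Prop :=
  forall mu1 mu2, dual mu1 -> dual mu2 ->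
  forall p q, is_dual_sup p (dsub mu2 mu1) dzero ->
              is_dual_sup q (dsub mu1 mu2) dzero ->
  forall t21, dual t21 -> dle dzero t21 -> dle t21 p ->
  exists t12, [/\ dual t12, dle dzero t12, dle t12 q &
    (F1 (dsub (dadd mu1 t21) t12) + F2 (dadd (dsub mu2 t21) t12)
      <= F1 mu1 + F2 mu2)%E].

Definition substitutable (F : (X -> R) -> \bar R) : Prop := Qrel F F.

Definition Prel (E1 E2 : X -> \bar R) : Prop :=
  forall phi1 phi2,
    (E1 (meet phi1 phi2) + E2 (join phi1 phi2) <= E1 phi1 + E2 phi2)%E.

Definition submodular (E : X -> \bar R) : Prop := Prel E E.

End BanachLattice.

(* Main.v *)
Require Import Defs.
From HB Require Import structures.
From mathcomp Require Import all_boot all_order all_algebra.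
From mathcomp Require Import all_classical all_reals all_analysis.
From mathcomp Require Import ring lra.
Set Implicit Arguments. Unset Strict Implicit. Unset Printing Implicit Defensive.
Import Order.TTheory GRing.Theory Num.Theory.
Import numFieldNormedType.Exports.
Local Open Scope ring_scope.
Local Open Scope classical_set_scope.

Section Dual.
Variables (R : realType) (X : completeNormedModType R).

Lemma dual0 (nu : X -> R) : dual nu -> nu 0 = 0.
Proof.
case=> lin _; have := lin (-1) 0 0.
by rewrite scaler0 addr0 mulN1r addNr.
Qed.

Lemma dualD (nu : X -> R) : dual nu -> forall x y, nu (x + y) = nu x + nu y.
Proof. by case=> lin _ x y; have := lin 1 x y; rewrite scale1r mul1r. Qed.

Lemma dualZ (nu : X -> R) : dual nu -> forall (a : R) x, nu (a *: x) = a * nu x.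
Proof.
move=> h a x; have := (proj1 h) a x 0.
by rewrite addr0 (dual0 h) addr0 => ->.
Qed.

Lemma dualN (nu : X -> R) : dual nu -> forall x, nu (- x) = - nu x.
Proof. by move=> h x; rewrite -scaleN1r (dualZ h) mulN1r. Qed.

Lemma dualB (nu : X -> R) : dual nu -> forall x y, nu (x - y) = nu x - nu y.
Proof. by move=> h x y; rewrite (dualD h) (dualN h). Qed.

Lemma dual_bound (nu : X -> R) : dual nu ->
  exists2 C, 0 < C & forall x, `|nu x| <= C * `|x|.
Proof.
move=> h; have n0 := dual0 h.
have := @cvgr_dist_lt _ _ _ _ _ nu (nu 0) (proj2 h 0) 1 ltr01.
rewrite n0 => H0; have [d /= d0 H] := iffLR nbhs_norm0P (H0 _).
exists (2 / d); first by rewrite divr_gt0.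
move=> x; have [->|x0] := eqVneq x 0; first by rewrite n0 !normr0 mulr0.
have nx : 0 < `|x| by rewrite normr_gt0.
set s := d / (2 * `|x|).
have s0 : 0 < s by rewrite divr_gt0 // mulr_gt0.
have : `|s *: x| < d.
  rewrite normrZ gtr0_norm //.
  have -> : s * `|x| = d / 2 by rewrite /s; field; rewrite gt_eqF.
  lra.
move/H => /=; rewrite sub0r normrN (dualZ h) normrM gtr0_norm // => hs.
have e : `|nu x| = s^-1 * (s * `|nu x|) by field; rewrite gt_eqF.
rewrite e; apply: le_trans (ler_wpM2l _ (ltW hs)) _; first by rewrite invr_ge0 ltW.
rewrite mulr1 /s le_eqVlt; apply/orP; left; apply/eqP; field; rewrite !gt_eqF //.
Qed.

Lemma bound_cont (f : X -> R) (C : R) : 0 < C ->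
  (forall x y, f (x - y) = f x - f y) ->
  (forall x, `|f x| <= C * `|x|) -> continuous f.
Proof.
move=> C0 fB fb x; apply/cvgrPdist_lt => e e0.
apply/nbhs_normP; exists (e / C); first by rewrite /= divr_gt0.
move=> z /= hz; rewrite -fB; apply: le_lt_trans (fb _) _.
by rewrite -ltr_pdivlMl // mulrC.
Qed.

Lemma dual_dadd (mu nu : X -> R) : dual mu -> dual nu -> dual (Defs.dadd mu nu).
Proof.
move=> hm hn; split.
  by move=> a x y; rewrite /Defs.dadd (proj1 hm) (proj1 hn) mulrDr; lra.
by move=> x; apply: cvgD; [exact: (proj2 hm x)|exact: (proj2 hn x)].
Qed.

Lemma dual_dsub (mu nu : X -> R) : dual mu -> dual nu -> dual (dsub mu nu).
Proof.
move=> hm hn; split.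
  by move=> a x y; rewrite /dsub (proj1 hm) (proj1 hn) mulrBr; lra.
by move=> x; apply: cvgB; [exact: (proj2 hm x)|exact: (proj2 hn x)].
Qed.

Lemma sup_add_le (A B : set (\bar R)) (r a0 b0 : R) : A a0%:E -> B b0%:E ->
  (forall a b, A a -> B b -> (a + b <= r%:E)%E) ->
  (ereal_sup A + ereal_sup B <= r%:E)%E.
Proof.
move=> Aa0 Bb0 H.
have Ha : forall a, A a -> (a + ereal_sup B <= r%:E)%E.
  move=> a Aa; case: a Aa => [a| |] Aa; last by rewrite addNye leNye.
    have hB : (ereal_sup B <= (r - a)%:E)%E.
      apply: ge_ereal_sup => b Bb; have := H _ _ Aa Bb.
      case: b Bb => [b| |] _ h; last exact: leNye.
        by rewrite -EFinD !lee_fin in h *; lra.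
      by rewrite addey in h.
    move: hB; case: (ereal_sup B) => [s| |] h; last by rewrite addeNy leNye.
      by rewrite -EFinD !lee_fin in h *; lra.
    by rewrite leye_eq in h.
  by have := H _ _ Aa Bb0; rewrite addye.
have := Ha _ Aa0; case E: (ereal_sup B) => [s| |] h0; last by rewrite addeNy leNye.
  have hA : (ereal_sup A <= (r - s)%:E)%E.
    apply: ge_ereal_sup => a Aa; have := Ha _ Aa; rewrite E.
    case: a Aa => [a| |] _ h; last exact: leNye.
      by rewrite -EFinD !lee_fin in h *; lra.
    by rewrite addye in h.
  move: hA; case: (ereal_sup A) => [t| |] h; last by rewrite addNye leNye.
    by rewrite -EFinD !lee_fin in h *; lra.
  by rewrite leye_eq in h.
by rewrite addey in h0.
Qed.

End Dual.

Section Sup.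
Variables (R : realType) (X : completeNormedModType R) (meet join : X -> X -> X).
Hypothesis HX : is_banach_lattice meet join.
Local Notation le := (bl_le meet).
Local Notation pos := (bl_pos join).
Local Notation neg := (bl_neg meet).

Lemma meetxx x : meet x x = x.
Proof.
have h1 := bl_meetKU HX x (meet x x).
by rewrite (bl_joinKI HX) in h1.
Qed.

Lemma ble_refl x : le x x.
Proof. exact: meetxx. Qed.

Lemma ble_trans x y z : le x y -> le y z -> le x z.
Proof.
rewrite /bl_le => hxy hyz.
by rewrite -hxy -(bl_meetA HX) hyz.
Qed.

Lemma ble_anti x y : le x y -> le y x -> x = y.
Proof. by rewrite /bl_le => h1 h2; rewrite -h1 (bl_meetC HX) h2. Qed.

Lemma le_joinE x y : le x y -> join x y = y.
Proof.
rewrite /bl_le => h.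
by rewrite (bl_joinC HX) -{1}h (bl_meetC HX) (bl_joinKI HX).
Qed.

Lemma meet_lel x y : le (meet x y) x.
Proof.
by rewrite /bl_le (bl_meetC HX (meet x y) x) (bl_meetA HX) meetxx.
Qed.

Lemma meet_ler x y : le (meet x y) y.
Proof. by rewrite (bl_meetC HX); exact: meet_lel. Qed.

Lemma meet_glb x y z : le z x -> le z y -> le z (meet x y).
Proof.
rewrite /bl_le => h1 h2.
by rewrite (bl_meetA HX) h1 h2.
Qed.

Lemma join_ubl x y : le x (join x y).
Proof. exact: (bl_meetKU HX). Qed.

Lemma join_ubr x y : le y (join x y).
Proof. by rewrite (bl_joinC HX); exact: join_ubl. Qed.

Lemma join_lub x y z : le x z -> le y z -> le (join x y) z.
Proof.
move=> h1 h2; rewrite /bl_le.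
have e1 := le_joinE h1; have e2 := le_joinE h2.
have : join (join x y) z = z by rewrite -(bl_joinA HX) e2 e1.
by move=> <-; rewrite (bl_meetKU HX).
Qed.

Lemma le_addr z x y : le x y -> le (x + z) (y + z).
Proof. exact: (bl_le_add HX). Qed.

Lemma le_addl z x y : le x y -> le (z + x) (z + y).
Proof. by rewrite ![z + _]addrC; exact: le_addr. Qed.

Lemma le_add2 a b c d : le a b -> le c d -> le (a + c) (b + d).
Proof. move=> h1 h2; apply: (ble_trans (le_addr c h1)); exact: le_addl. Qed.

Lemma le_subP x y : le x y <-> le 0 (y - x).
Proof.
split=> h.
  by have := le_addr (- x) h; rewrite subrr.
by have := le_addr x h; rewrite add0r subrK.
Qed.

Lemma le_opp x y : le x y -> le (- y) (- x).
Proof.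
move=> h; have := le_addr (- x - y) h.
by rewrite (addrA x) (subrr x) add0r (addrCA y) (subrr y) addr0.
Qed.

Lemma le_scale (a : R) x y : 0 <= a -> le x y -> le (a *: x) (a *: y).
Proof. exact: (bl_le_scale HX). Qed.

Lemma add_meet x y z : meet x y + z = meet (x + z) (y + z).
Proof.
apply: ble_anti.
  by apply: meet_glb; apply: le_addr; [exact: meet_lel|exact: meet_ler].
have h : le (meet (x + z) (y + z) - z) (meet x y).
  apply: meet_glb.
    by have := le_addr (- z) (meet_lel (x + z) (y + z)); rewrite (addrK z x).
  by have := le_addr (- z) (meet_ler (x + z) (y + z)); rewrite (addrK z y).
by have := le_addr z h; rewrite subrK.
Qed.

Lemma add_join x y z : join x y + z = join (x + z) (y + z).
Proof.
apply: ble_anti; last first.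
  by apply: join_lub; apply: le_addr; [exact: join_ubl|exact: join_ubr].
have h : le (join x y) (join (x + z) (y + z) - z).
  apply: join_lub.
    by have := le_addr (- z) (join_ubl (x + z) (y + z)); rewrite (addrK z x).
  by have := le_addr (- z) (join_ubr (x + z) (y + z)); rewrite (addrK z y).
by have := le_addr z h; rewrite subrK.
Qed.

Lemma opp_meet x y : - meet x y = join (- x) (- y).
Proof.
apply: ble_anti; last first.
  by apply: join_lub; apply: le_opp; [exact: meet_lel|exact: meet_ler].
have h : le (- join (- x) (- y)) (meet x y).
  apply: meet_glb.
    by have := le_opp (join_ubl (- x) (- y)); rewrite (opprK x).
  by have := le_opp (join_ubr (- x) (- y)); rewrite (opprK y).
by have := le_opp h; rewrite opprK.
Qed.

Lemma meet_join_add x y : meet x y + join x y = x + y.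
Proof.
have : join x y = x + y - meet x y.
  rewrite opp_meet addrC add_join (bl_joinC HX x y); congr join.
    by rewrite (addKr x y).
  by rewrite (addrC x y) (addKr y x).
by move=> ->; rewrite addrC subrK.
Qed.

Lemma pos_ge0 x : le 0 (pos x).
Proof. exact: join_ubr. Qed.

Lemma neg_ge0 x : le 0 (neg x).
Proof.
by have := le_opp (meet_ler x 0); rewrite oppr0.
Qed.

Lemma pos_neg x : pos x - neg x = x.
Proof.
by rewrite /bl_pos /bl_neg opprK addrC meet_join_add addr0.
Qed.

Lemma pos_id x : le 0 x -> pos x = x.
Proof. by move=> h; rewrite /bl_pos (bl_joinC HX) le_joinE. Qed.

Lemma neg_id x : le 0 x -> neg x = 0.
Proof. by move=> h; rewrite /bl_neg (bl_meetC HX) h oppr0. Qed.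

Lemma abs_id x : le 0 x -> bl_abs meet join x = x.
Proof. by move=> h; rewrite /bl_abs pos_id // neg_id // addr0. Qed.

Lemma norm_mono x y : le 0 x -> le x y -> `|x| <= `|y|.
Proof.
move=> h0 h; have hy := ble_trans h0 h.
by apply: (bl_norm_mono HX); rewrite !abs_id.
Qed.

Lemma norm_pos x : `|pos x| <= `|x|.
Proof.
apply: (bl_norm_mono HX); rewrite (abs_id (pos_ge0 x)).
rewrite /bl_abs -{1}(addr0 (pos x)); apply: le_addl; exact: neg_ge0.
Qed.

Lemma norm_neg x : `|neg x| <= `|x|.
Proof.
apply: (bl_norm_mono HX); rewrite (abs_id (neg_ge0 x)).
rewrite /bl_abs -{1}(add0r (neg x)); apply: le_addr; exact: pos_ge0.
Qed.

Lemma meet_mono a b c d : le a b -> le c d -> le (meet a c) (meet b d).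
Proof.
move=> h1 h2; apply: meet_glb.
  exact: ble_trans (meet_lel _ _) h1.
exact: ble_trans (meet_ler _ _) h2.
Qed.

Lemma scale_meet (a : R) x y : 0 < a -> a *: meet x y = meet (a *: x) (a *: y).
Proof.
move=> a0; have a0' := ltW a0.
apply: ble_anti.
  by apply: meet_glb; apply: le_scale => //; [exact: meet_lel|exact: meet_ler].
have h : le (a^-1 *: meet (a *: x) (a *: y)) (meet x y).
  have ai : 0 <= a^-1 by rewrite invr_ge0.
  apply: meet_glb.
    rewrite -{2}(scalerK (lt0r_neq0 a0) x); apply: le_scale => //; exact: meet_lel.
  rewrite -{2}(scalerK (lt0r_neq0 a0) y); apply: le_scale => //; exact: meet_ler.
have := le_scale a0' h; rewrite scalerA divff ?scale1r //; exact: lt0r_neq0.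
Qed.

Lemma meet_pos_neg d : meet (pos d) (neg d) = 0.
Proof.
have : meet (pos d) (neg d) - neg d = - neg d.
  by rewrite add_meet subrr pos_neg /bl_neg opprK.
by move=> h; rewrite -(subrK (neg d) (meet (pos d) (neg d))) h addNr.
Qed.

Lemma disj_scale (c : R) u v : 0 <= c -> le 0 u -> le 0 v -> meet u v = 0 ->
  meet (c *: u) v = 0.
Proof.
move=> c0 u0 v0 uv; apply: ble_anti; last first.
  apply: meet_glb => //; rewrite -(scaler0 _ c); exact: le_scale.
have c1 : 0 < c + 1 by rewrite ltr_wpDl.
rewrite -(scaler0 _ (c + 1)) -uv scale_meet //.
apply: meet_mono.
  by apply/le_subP; rewrite scalerDl scale1r (addrC (c *: u) u) (addrK (c *: u)).
apply/le_subP; rewrite scalerDl scale1r (addrK v) -(scaler0 _ c); exact: le_scale.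
Qed.

Lemma opp_join x y : - join x y = meet (- x) (- y).
Proof. by rewrite -(opprK (meet _ _)) opp_meet !opprK. Qed.

Lemma meet_pos_sub x y : meet x y = x - pos (x - y).
Proof.
rewrite /bl_pos opp_join oppr0 opprB addrC add_meet add0r (subrK x y).
exact: (bl_meetC HX).
Qed.

Lemma join_pos_sub x y : join x y = y + pos (x - y).
Proof.
by rewrite /bl_pos addrC add_join add0r (subrK y x).
Qed.


Record goodS (S : X -> Prop) : Prop := {
  S0 : S 0;
  Sdown : forall y z, le 0 z -> le z y -> S y -> S z;
  SD : forall y z, S y -> S z -> S (y + z);
  SZ : forall (c : R) y, 0 <= c -> S y -> S (c *: y) }.

Section Inner.
Variables (nu : X -> R) (S : X -> Prop).
Hypotheses (Hnu : dual nu) (HS : goodS S).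

Definition Aset (x : X) : set R :=
  [set nu y | y in [set y | le 0 y /\ le y x /\ S y]].
Definition Pf (x : X) : R := sup (Aset x).
Definition pf (x : X) : R := Pf (pos x) - Pf (neg x).

Lemma P_ub x y : le 0 y -> le y x -> S y -> nu y <= Pf x.
Proof.
move=> y0 yx Sy; have [C C0 HC] := dual_bound Hnu.
apply: sup_upper_bound; last by exists y.
split; first by exists (nu y); exists y.
exists (C * `|x|) => _ [z [z0 [zx _]] <-].
apply: le_trans (ler_norm _) _; apply: le_trans (HC z) _.
rewrite ler_pM2l //; exact: norm_mono.
Qed.

Lemma P_le x b : le 0 x ->
  (forall y, le 0 y -> le y x -> S y -> nu y <= b) -> Pf x <= b.
Proof.
move=> x0 H; apply: ge_sup.
  exists (nu 0); exists 0 => //=; split; [exact: ble_refl|split=> //; exact: (S0 HS)].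
by move=> _ [y [y0 [yx Sy]] <-]; exact: H.
Qed.

Lemma P_ge0 x : le 0 x -> 0 <= Pf x.
Proof.
move=> x0; rewrite -(dual0 Hnu); apply: P_ub => //; [exact: ble_refl|exact: (S0 HS)].
Qed.

Lemma P0 : Pf 0 = 0.
Proof.
apply/eqP; rewrite eq_le P_ge0 ?andbT; last exact: ble_refl.
apply: P_le; first exact: ble_refl.
by move=> y y0 y1; rewrite (ble_anti y1 y0) (dual0 Hnu).
Qed.

Lemma P_bound : exists2 C, 0 < C & forall x, le 0 x -> Pf x <= C * `|x|.
Proof.
have [C C0 HC] := dual_bound Hnu; exists C => // x x0.
apply: P_le => // y y0 yx _.
apply: le_trans (ler_norm _) _; apply: le_trans (HC y) _.
rewrite ler_pM2l //; exact: norm_mono.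
Qed.

Lemma P_add x1 x2 : le 0 x1 -> le 0 x2 -> Pf (x1 + x2) = Pf x1 + Pf x2.
Proof.
move=> h1 h2.
have h12 : le 0 (x1 + x2) by rewrite -(addr0 0); exact: le_add2.
apply/eqP; rewrite eq_le; apply/andP; split.
  apply: P_le => // y y0 yx Sy.
  set y1 := meet y x1.
  have e : y = y1 + pos (y - x1) by rewrite /y1 meet_pos_sub subrK.
  have y10 : le 0 y1 by apply: meet_glb.
  have hy1 : le y1 y by exact: meet_lel.
  have hy2 : le (pos (y - x1)) y.
    by rewrite {2}e -{1}(add0r (pos _)); apply: le_addr.
  rewrite e (dualD Hnu); apply: lerD.
    by apply: P_ub => //; [exact: meet_ler|exact: (Sdown HS y10 hy1 Sy)].
  apply: P_ub => //; first exact: pos_ge0.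
    apply: join_lub => //.
    by have := le_addr (- x1) yx; rewrite (addrC x1 x2) (addrK x1).
  exact: (Sdown HS (pos_ge0 _) hy2 Sy).
rewrite -lerBrDr; apply: P_le => // y1 y10 y1x Sy1.
rewrite lerBrDr addrC -lerBrDr; apply: P_le => // y2 y20 y2x Sy2.
rewrite lerBrDr addrC -(dualD Hnu); apply: P_ub.
- by rewrite -(addr0 0); exact: le_add2.
- exact: le_add2.
- exact: (SD HS).
Qed.

Lemma P_scale (c : R) x : 0 < c -> le 0 x -> Pf (c *: x) = c * Pf x.
Proof.
move=> c0 x0; have c0' := ltW c0; have cn : c != 0 by rewrite gt_eqF.
have cx0 : le 0 (c *: x) by rewrite -(scaler0 _ c); exact: le_scale.
have ci : 0 <= c^-1 by rewrite invr_ge0.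
apply/eqP; rewrite eq_le; apply/andP; split.
  apply: P_le => // y y0 yx Sy.
  have -> : y = c *: (c^-1 *: y) by rewrite scalerA divff // scale1r.
  rewrite (dualZ Hnu) ler_pM2l //; apply: P_ub.
  - by rewrite -(scaler0 _ c^-1); exact: le_scale.
  - by rewrite -(scalerK cn x); exact: le_scale.
  - exact: (SZ HS).
rewrite -ler_pdivlMl //; apply: P_le => // y y0 yx Sy.
rewrite ler_pdivlMl // -(dualZ Hnu); apply: P_ub.
- by rewrite -(scaler0 _ c); exact: le_scale.
- exact: le_scale.
- exact: (SZ HS).
Qed.

Lemma pf_diff u v : le 0 u -> le 0 v -> pf (u - v) = Pf u - Pf v.
Proof.
move=> u0 v0; rewrite /pf; set z := u - v.
have e : pos z + v = neg z + u.
  have : pos z = z + neg z by rewrite -{2}(pos_neg z) subrK.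
  by move=> ->; rewrite /z addrAC subrK addrC.
have := congr1 Pf e; rewrite !P_add //; [|exact: neg_ge0|exact: pos_ge0].
move=> h; lra.
Qed.

Lemma pf_pos x : le 0 x -> pf x = Pf x.
Proof.
move=> x0; have := pf_diff x0 (ble_refl 0); rewrite subr0 P0 subr0; done.
Qed.

Lemma pfD x y : pf (x + y) = pf x + pf y.
Proof.
have e : x + y = (pos x + pos y) - (neg x + neg y).
  by rewrite opprD addrACA !pos_neg.
rewrite {1}e pf_diff; last by rewrite -(addr0 0); apply: le_add2; exact: neg_ge0.
  by rewrite (P_add (pos_ge0 x) (pos_ge0 y)) (P_add (neg_ge0 x) (neg_ge0 y)) /pf; lra.
by rewrite -(addr0 0); apply: le_add2; exact: pos_ge0.
Qed.

Lemma pfZ (a : R) x : pf (a *: x) = a * pf x.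
Proof.
have [a0|a0|->] := ltgtP a 0; last first.
- by rewrite scale0r mul0r (pf_pos (ble_refl 0)) P0.
- have e : a *: x = a *: pos x - a *: neg x by rewrite -scalerBr pos_neg.
  rewrite e pf_diff; first by rewrite (P_scale a0 (pos_ge0 x)) (P_scale a0 (neg_ge0 x)) /pf; lra.
    by rewrite -(scaler0 _ a); apply: le_scale; [exact: ltW|exact: pos_ge0].
  by rewrite -(scaler0 _ a); apply: le_scale; [exact: ltW|exact: neg_ge0].
- have na : 0 < - a by rewrite oppr_gt0.
  have e : a *: x = (- a) *: neg x - (- a) *: pos x.
    by rewrite -scalerBr -opprB pos_neg scalerN scaleNr opprK.
  rewrite e pf_diff; first by rewrite (P_scale na (pos_ge0 x)) (P_scale na (neg_ge0 x)) /pf; lra.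
    by rewrite -(scaler0 _ (- a)); apply: le_scale; [exact: ltW|exact: neg_ge0].
  by rewrite -(scaler0 _ (- a)); apply: le_scale; [exact: ltW|exact: pos_ge0].
Qed.

Lemma pf_dual : dual pf.
Proof.
split; first by move=> a x y; rewrite pfD pfZ.
have [C C0 HC] := P_bound.
apply: (@bound_cont _ _ _ (C + C)); first by rewrite addr_gt0.
  by move=> x y; rewrite pfD -scaleN1r pfZ mulN1r.
move=> x; rewrite /pf.
have h1 := HC _ (pos_ge0 x); have h2 := HC _ (neg_ge0 x).
have g1 := P_ge0 (pos_ge0 x); have g2 := P_ge0 (neg_ge0 x).
have n1 := norm_pos x; have n2 := norm_neg x.
have m1 : C * `|pos x| <= C * `|x| by rewrite ler_pM2l.
have m2 : C * `|neg x| <= C * `|x| by rewrite ler_pM2l.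
rewrite ler_norml; apply/andP; split; lra.
Qed.

End Inner.

Local Notation dz := (@dzero R X).
Definition Tall : X -> Prop := fun _ => True.
Definition Sband (psi : X) : X -> Prop :=
  fun y => exists c : R, 0 <= c /\ le y (c *: psi).

Lemma goodT : goodS Tall.
Proof. by split. Qed.

Lemma goodB psi : goodS (Sband psi).
Proof.
split.
- by exists 0; split => //; rewrite scale0r; exact: ble_refl.
- move=> y z _ zy [c [c0 yc]]; exists c; split => //; exact: (ble_trans zy yc).
- move=> y z [c1 [h1 y1]] [c2 [h2 z2]]; exists (c1 + c2); split; first exact: addr_ge0.
  rewrite scalerDl; exact: le_add2.
- move=> c y c0 [e [e0 ye]]; exists (c * e); split; first exact: mulr_ge0.
  rewrite -scalerA; exact: le_scale.
Qed.

Lemma PS_le_PT nu S x : dual nu -> goodS S -> le 0 x -> Pf nu S x <= Pf nu Tall x.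
Proof.
move=> hn hs x0; apply: (P_le hs x0) => y y0 yx _.
exact: (P_ub (S:=Tall) hn y0 yx I).
Qed.

Lemma p_sup nu : dual nu -> is_dual_sup meet (pf nu Tall) nu dz.
Proof.
move=> hn; split.
- exact: (pf_dual hn goodT).
- move=> phi phi0; rewrite (pf_pos hn goodT phi0).
  exact: (P_ub (S:=Tall) hn phi0 (ble_refl phi) I).
- move=> phi phi0; rewrite /dzero (pf_pos hn goodT phi0); exact: (P_ge0 hn goodT phi0).
- move=> q hq h1 h2 phi phi0; rewrite (pf_pos hn goodT phi0).
  apply: (P_le goodT phi0) => y y0 yx _.
  apply: le_trans (h1 y y0) _.
  have := h2 (phi - y) ((le_subP y phi).1 yx); rewrite /dzero (dualB hq); lra.
Qed.

Lemma key F1 F2 : proper_dual F1 -> proper_dual F2 -> Qrel meet F2 F1 ->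
  forall phi1 phi2 mu1 mu2, dual mu1 -> dual mu2 ->
  ((mu1 (meet phi1 phi2))%:E - F1 mu1 + ((mu2 (join phi1 phi2))%:E - F2 mu2)
     <= conj F1 phi1 + conj F2 phi2)%E.
Proof.
move=> [P1a _] [P2a _] HQ phi1 phi2 mu1 mu2 d1 d2.
case E1: (F1 mu1) => [f1| |]; last by have := P1a _ d1; rewrite E1.
  2: by rewrite /= addeNy addNye leNye.
case E2: (F2 mu2) => [f2| |]; last by have := P2a _ d2; rewrite E2.
  2: by rewrite /= !addeNy leNye.
set nu := dsub mu2 mu1.
have dn : dual nu := dual_dsub d2 d1.
set d := phi1 - phi2.
set psi := pos d. set psi' := neg d.
set p := pf nu Tall.
set q := dsub p nu.
have dp : dual p := pf_dual dn goodT.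
have Hp : is_dual_sup meet p (dsub mu2 mu1) dz := p_sup dn.
have [_ Hp2 Hp3 Hp4] := Hp.
have Hq : is_dual_sup meet q (dsub mu1 mu2) dz.
  split.
  - exact: (dual_dsub dp dn).
  - move=> phi phi0; have := Hp3 phi phi0; rewrite /q /nu /dsub /dzero; lra.
  - move=> phi phi0; have := Hp2 phi phi0; rewrite /q /nu /dsub /dzero; lra.
  - move=> r dr h1 h2 phi phi0.
    have h3 : dle meet (dsub mu2 mu1) (Defs.dadd r nu).
      move=> z z0; have := h2 z z0; rewrite /nu /dsub /Defs.dadd /dzero; lra.
    have h4 : dle meet dz (Defs.dadd r nu).
      move=> z z0; have := h1 z z0; rewrite /nu /dsub /Defs.dadd /dzero; lra.
    have := Hp4 _ (dual_dadd dr dn) h3 h4 phi phi0.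
    rewrite /q /nu /dsub /Defs.dadd; lra.
set t21 := pf nu (Sband psi).
have dt : dual t21 := pf_dual dn (goodB psi).
have t0 : dle meet dz t21.
  move=> phi phi0; rewrite /dzero /t21 (pf_pos dn (goodB psi) phi0).
  exact: (P_ge0 dn (goodB psi) phi0).
have tp : dle meet t21 p.
  move=> phi phi0; rewrite /t21 /p (pf_pos dn (goodB psi) phi0) (pf_pos dn goodT phi0).
  exact: (PS_le_PT dn (goodB psi) phi0).
have [t12 [dt12 t120 t12q HF]] := HQ mu1 mu2 d1 d2 p q Hp Hq t21 dt t0 tp.
rewrite E1 E2 in HF.
set m1 := dsub (Defs.dadd mu1 t21) t12.
set m2 := Defs.dadd (dsub mu2 t21) t12.
have dm1 : dual m1 := dual_dsub (dual_dadd d1 dt) dt12.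
have dm2 : dual m2 := dual_dadd (dual_dsub d2 dt) dt12.
have ne2 : F2 m2 != -oo%E by apply/eqP; exact: P2a.
case G1: (F1 m1) => [g1| |]; last by have := P1a _ dm1; rewrite G1.
  2: by rewrite -/m1 -/m2 G1 (addye ne2) leye_eq in HF.
case G2: (F2 m2) => [g2| |]; last by have := P2a _ dm2; rewrite G2.
  2: by rewrite -/m1 -/m2 G1 G2 addey // leye_eq in HF.
rewrite -/m1 -/m2 G1 G2 -!EFinD lee_fin in HF.
have s1 : ((m1 phi1)%:E - g1%:E <= conj F1 phi1)%E.
  by apply: ereal_sup_ubound; exists m1 => //; rewrite G1.
have s2 : ((m2 phi2)%:E - g2%:E <= conj F2 phi2)%E.
  by apply: ereal_sup_ubound; exists m2 => //; rewrite G2.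
apply: le_trans (leeD s1 s2); rewrite -!EFinB -!EFinD lee_fin.
have e1 : mu1 (meet phi1 phi2) = mu1 phi1 - mu1 psi.
  by rewrite meet_pos_sub (dualB d1).
have e2 : mu2 (join phi1 phi2) = mu2 phi2 + mu2 psi.
  by rewrite join_pos_sub (dualD d2).
have f21 : t21 phi1 - t21 phi2 = t21 psi - t21 psi'.
  by rewrite -!(dualB dt) /psi /psi' pos_neg.
have f12 : t12 phi1 - t12 phi2 = t12 psi - t12 psi'.
  by rewrite -!(dualB dt12) /psi /psi' pos_neg.
have a1 : t21 psi = p psi.
  rewrite /t21 /p (pf_pos dn (goodB psi) (pos_ge0 d)) (pf_pos dn goodT (pos_ge0 d)).
  apply/eqP; rewrite eq_le (PS_le_PT dn (goodB psi) (pos_ge0 d)) /=.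
  apply: (P_le goodT (pos_ge0 d)) => y y0 yx _.
  apply: (P_ub (S:=Sband psi) dn y0 yx); exists 1; split; first exact: ler01.
  by rewrite scale1r.
have a2 : t21 psi' = 0.
  rewrite /t21 (pf_pos dn (goodB psi) (neg_ge0 d)).
  apply/eqP; rewrite eq_le (P_ge0 dn (goodB psi) (neg_ge0 d)) andbT.
  apply: (P_le (goodB psi) (neg_ge0 d)) => y y0 yx [c [c0 yc]].
  have := meet_glb yc yx.
  rewrite /psi /psi' (disj_scale c0 (pos_ge0 d) (neg_ge0 d) (meet_pos_neg d)) => y1.
  by rewrite (ble_anti y1 y0) (dual0 dn).
have a3 : t12 psi <= q psi := t12q psi (pos_ge0 d).
have a4 : 0 <= t12 psi' := t120 psi' (neg_ge0 d).
have eq : q psi = p psi - (mu2 psi - mu1 psi) by [].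
have em1 : m1 phi1 = mu1 phi1 + t21 phi1 - t12 phi1 by [].
have em2 : m2 phi2 = mu2 phi2 - t21 phi2 + t12 phi2 by [].
rewrite e1 e2 em1 em2; lra.
Qed.

Lemma part1 F1 F2 : proper_dual F1 -> proper_dual F2 -> Qrel meet F2 F1 ->
  Prel meet join (conj F1) (conj F2).
Proof.
move=> hF1 hF2 HQ phi1 phi2.
have K := key hF1 hF2 HQ phi1 phi2.
case: hF1 => [P1a [m1 [dm1 fm1]]]; case: hF2 => [P2a [m2 [dm2 fm2]]].
case E1: (F1 m1) fm1 => [f1| |] // _; last by have := P1a _ dm1; rewrite E1.
case E2: (F2 m2) fm2 => [f2| |] // _; last by have := P2a _ dm2; rewrite E2.
have := K m1 m2 dm1 dm2; rewrite E1 E2.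
case Ec: (conj F1 phi1 + conj F2 phi2) => [r| |] h; last by [].
  apply: (sup_add_le (r:=r) (a0:=m1 (meet phi1 phi2) - f1) (b0:=m2 (join phi1 phi2) - f2)).
  - by exists m1 => //; rewrite E1.
  - by exists m2 => //; rewrite E2.
  - move=> a b [mu1 dmu1 <-] [mu2 dmu2 <-]; rewrite -Ec; exact: K.
exact: leey.
Qed.

End Sup.

Theorem theorem2p50 (R : realType) (X : completeNormedModType R)
  (meet join : X -> X -> X) (HX : is_banach_lattice meet join) :
  (forall F1 F2 : (X -> R) -> \bar R,
     proper_dual F1 -> proper_dual F2 -> Qrel meet F2 F1 ->
     Prel meet join (conj F1) (conj F2)) /\
  (forall F : (X -> R) -> \bar R,
     proper_dual F -> substitutable meet F ->
     submodular meet join (conj F)).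
Proof.
split.
- move=> F1 F2 h1 h2 hQ; exact: (part1 HX h1 h2 hQ).
- move=> F hF hS; exact: (part1 HX hF hF hS).
Qed.
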